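(* Let $\mathsf{Cof}$ be a class of maps in $\mathcal{E}$ satisfying axioms (C1)–(C4) and (C6). Then $\mathsf{Cof}$ is closed under composition (axiom (C5)) if and only if $\mathcal{E}\Vdash(\forall\varphi,\psi:\Omega)\,\mathrm{cof}\,\varphi\Rightarrow\big((\varphi\Rightarrow\mathrm{cof}\,\psi)\Rightarrow\mathrm{cof}(\varphi\wedge\psi)\big)$.
   Context: $\mathbb{C}$ is a small category, $\mathcal{E}=[\mathbb{C}^{op},\mathbf{Set}]$ with subobject classifier $\mathrm{true}:1\to\Omega$. Axioms on a class $\mathsf{Cof}$: (C1) its elements are monomorphisms; (C2) $0\to1$ is in it; (C3) $\mathrm{id}_1$ is in it; (C4) stable under pullback along all maps; (C5) closed under composition; (C6) the full subcategory of the category of arrows and pullback squares spanned by $\mathsf{Cof}$ has a terminal object $\top:1\rightarrowtail\Phi$, with $\Phi\rightarrowtail\Omega$ a subobject whose characteristic map is $\mathrm{cof}:\Omega\to\Omega$. Kripke–Joyal forcing: for $\rho:Y\to\Omega$ and $y:\mathbf{y}c\to Y$, $c\Vdash\rho(y)$ means $y$ factors through the subobject classified by $\rho$; $\mathcal{E}\Vdash\theta$ for a closed formula $\theta$ means $c\Vdash\theta$ for every $c\in\mathbb{C}$. Logical connectives and quantifiers over $\Omega$ are interpreted by the internal Heyting algebra structure. *)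

(* Defs.v *)
From Stdlib Require Import FunctionalExtensionality PropExtensionality ProofIrrelevance.

Record Cat := MkCat {
  Ob : Type;
  Hom : Ob -> Ob -> Type;
  idm : forall a, Hom a a;
  comp : forall a b c, Hom b c -> Hom a b -> Hom a c;
  comp_id_l : forall a b (f : Hom a b), comp a b b (idm b) f = f;
  comp_id_r : forall a b (f : Hom a b), comp a a b f (idm a) = f;
  comp_assoc : forall a b c d (f : Hom c d) (g : Hom b c) (h : Hom a b),
      comp a c d f (comp a b c g h) = comp a b d (comp b c d f g) h
}.
Arguments idm {_} _.
Arguments comp {_ _ _ _} _ _.
Arguments Hom {_} _ _.

Record Psh (C : Cat) := MkPsh {
  pob :> Ob C -> Type;
  act : forall a b, Hom b a -> pob a -> pob b;
  act_id : forall a x, act a a (idm a) x = x;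
  act_comp : forall a b c (f : Hom b a) (g : Hom c b) x,
      act a c (comp f g) x = act b c g (act a b f x)
}.
Arguments MkPsh {C}.
Arguments act {_} _ {_ _} _ _.

Record Nat {C : Cat} (F G : Psh C) := MkNat {
  nt :> forall a, F a -> G a;
  nt_nat : forall a b (f : Hom b a) x, nt b (act F f x) = act G f (nt a x)
}.
Arguments MkNat {C F G}.
Arguments nt {_ _ _} _ _ _.

Section Basics.
Context {C : Cat}.

Definition neq {F G : Psh C} (m n : Nat F G) : Prop :=
  forall a x, nt m a x = nt n a x.

Program Definition ncomp {F G H : Psh C} (n : Nat G H) (m : Nat F G) : Nat F H :=
  MkNat (fun a x => nt n a (nt m a x)) _.
Next Obligation. intros; simpl; now rewrite !nt_nat. Qed.

Program Definition nid (F : Psh C) : Nat F F := MkNat (fun a x => x) _.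

Program Definition one : Psh C := MkPsh (fun _ => unit) (fun _ _ _ x => x) _ _.
Program Definition zero : Psh C := MkPsh (fun _ => Empty_set) (fun _ _ _ x => x) _ _.

Program Definition to_one (F : Psh C) : Nat F one := MkNat (fun _ _ => tt) _.
Program Definition from_zero (F : Psh C) : Nat zero F :=
  MkNat (fun _ (x : Empty_set) => match x with end) _.
Next Obligation. intros; simpl in *; tauto. Qed.

Program Definition prodP (F G : Psh C) : Psh C :=
  MkPsh (fun a => (F a * G a)%type) (fun a b f p => (act F f (fst p), act G f (snd p))) _ _.
Next Obligation. intros; simpl; now rewrite !act_id. Qed.
Next Obligation. intros; simpl; now rewrite !act_comp. Qed.

Program Definition pair {X F G : Psh C} (m : Nat X F) (n : Nat X G) : Nat X (prodP F G) :=
  MkNat (fun a x => (nt m a x, nt n a x)) _.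
Next Obligation. intros; simpl; now rewrite !nt_nat. Qed.

Program Definition pr1 {F G : Psh C} : Nat (prodP F G) F := MkNat (fun a p => fst p) _.
Program Definition pr2 {F G : Psh C} : Nat (prodP F G) G := MkNat (fun a p => snd p) _.

Program Definition yon (c : Ob C) : Psh C :=
  MkPsh (fun d => Hom d c) (fun a b f g => comp g f) _ _.
Next Obligation. apply comp_id_r. Qed.
Next Obligation. apply comp_assoc. Qed.

Definition mono {F G : Psh C} (m : Nat F G) : Prop :=
  forall (X : Psh C) (u v : Nat X F), neq (ncomp m u) (ncomp m v) -> neq u v.

(* P --p1--> A
   |p2       |f
   v         v
   B  --g--> Z      is a pullback square *)
Definition IsPullback {A B Z : Psh C} (P : Psh C) (p1 : Nat P A) (p2 : Nat P B)
    (f : Nat A Z) (g : Nat B Z) : Prop :=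
  neq (ncomp f p1) (ncomp g p2) /\
  forall (X : Psh C) (q1 : Nat X A) (q2 : Nat X B),
    neq (ncomp f q1) (ncomp g q2) ->
    exists u : Nat X P,
      neq (ncomp p1 u) q1 /\ neq (ncomp p2 u) q2 /\
      forall u' : Nat X P, neq (ncomp p1 u') q1 -> neq (ncomp p2 u') q2 -> neq u' u.

Record sieve (c : Ob C) := MkSieve {
  sv :> forall d, Hom d c -> Prop;
  sv_closed : forall d e (f : Hom d c) (g : Hom e d), sv d f -> sv e (comp f g)
}.
Arguments MkSieve {c}.
Arguments sv {c} _ d _.

Lemma sieve_ext {c} (S T : sieve c) :
  (forall d f, sv S d f <-> sv T d f) -> S = T.
Proof.
  destruct S as [S HS], T as [T HT]; simpl; intros H.
  assert (E : S = T).
  { apply functional_extensionality_dep; intro d.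
    apply functional_extensionality; intro f.
    apply propositional_extensionality; apply H. }
  subst T. f_equal. apply proof_irrelevance.
Qed.

Program Definition pull {a b} (f : Hom b a) (S : sieve a) : sieve b :=
  MkSieve (fun d g => sv S d (comp f g)) _.
Next Obligation. rewrite comp_assoc. now apply sv_closed. Qed.

Program Definition Omega : Psh C := MkPsh sieve (fun a b f S => pull f S) _ _.
Next Obligation. apply sieve_ext; intros; simpl. now rewrite comp_id_l. Qed.
Next Obligation. apply sieve_ext; intros; simpl. now rewrite comp_assoc. Qed.

Program Definition maxsieve (c : Ob C) : sieve c := MkSieve (fun _ _ => True) _.

Program Definition trueO : Nat one Omega := MkNat (fun a _ => maxsieve a) _.
Next Obligation. apply sieve_ext; intros; simpl; tauto. Qed.

Program Definition andS {c} (S T : sieve c) : sieve c :=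
  MkSieve (fun d f => sv S d f /\ sv T d f) _.
Next Obligation. split; apply sv_closed; assumption. Qed.

Program Definition impS {c} (S T : sieve c) : sieve c :=
  MkSieve (fun d f => forall e (g : Hom e d), sv S e (comp f g) -> sv T e (comp f g)) _.
Next Obligation.
  intros. rewrite <- comp_assoc in H0 |- *. now apply H.
Qed.

Program Definition andO : Nat (prodP Omega Omega) Omega :=
  MkNat (fun a p => andS (fst p) (snd p)) _.
Next Obligation. apply sieve_ext; intros; simpl; tauto. Qed.

Program Definition impO : Nat (prodP Omega Omega) Omega :=
  MkNat (fun a p => impS (fst p) (snd p)) _.
Next Obligation. intros. apply sieve_ext; intros; simpl. now setoid_rewrite comp_assoc. Qed.

(* universal quantification over Omega x Omega of a predicate
   rho : Omega x Omega -> Omega, giving a closed formula 1 -> Omega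
   (right adjoint to pulling back along Omega x Omega -> 1) *)
Program Definition forallS (rho : Nat (prodP Omega Omega) Omega) (c : Ob C) : sieve c :=
  MkSieve (fun d f => forall e (g : Hom e d) (p : sieve e * sieve e),
                        sv (nt rho e p) e (idm e)) _.
Next Obligation. intros. apply (H e0 (comp g g0)). Qed.

Program Definition forallO (rho : Nat (prodP Omega Omega) Omega) : Nat one Omega :=
  MkNat (fun c _ => forallS rho c) _.
Next Obligation. intros. apply sieve_ext; intros; simpl; split; intros; auto. Qed.

(* c ||- rho(y), for rho : Y -> Omega and y : yc -> Y: y factors through the
   subobject classified by rho (i.e. through the pullback of true along rho). *)
Definition forces (c : Ob C) {Y : Psh C} (rho : Nat Y Omega) (y : Nat (yon c) Y) : Prop :=
  forall (S : Psh C) (m : Nat S Y) (t : Nat S one),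
    IsPullback S m t rho trueO -> exists h : Nat (yon c) S, neq (ncomp m h) y.

Definition Eforces (theta : Nat one Omega) : Prop :=
  forall c : Ob C, forces c theta (to_one (yon c)).

(* the closed formula
   (forall phi psi : Omega) cof phi => ((phi => cof psi) => cof (phi /\ psi)) *)
Definition theta_body (cof : Nat Omega Omega) : Nat (prodP Omega Omega) Omega :=
  ncomp impO
    (pair (ncomp cof pr1)
          (ncomp impO
             (pair (ncomp impO (pair pr1 (ncomp cof pr2)))
                   (ncomp cof andO)))).

Definition theta (cof : Nat Omega Omega) : Nat one Omega := forallO (theta_body cof).

Definition MapClass := forall A B : Psh C, Nat A B -> Prop.

Definition C1 (Cof : MapClass) : Prop := forall A B (m : Nat A B), Cof A B m -> mono m.
Definition C2 (Cof : MapClass) : Prop := Cof zero one (from_zero one).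
Definition C3 (Cof : MapClass) : Prop := Cof one one (nid one).
Definition C4 (Cof : MapClass) : Prop :=
  forall A B (m : Nat A B) B' (f : Nat B' B) A' (f' : Nat A' A) (m' : Nat A' B'),
    Cof A B m -> IsPullback A' f' m' m f -> Cof A' B' m'.
Definition C5 (Cof : MapClass) : Prop :=
  forall A B D (m : Nat A B) (n : Nat B D), Cof A B m -> Cof B D n -> Cof A D (ncomp n m).

(* (C6): top : 1 >-> Phi is a terminal object of the full subcategory of the
   category of arrows and pullback squares spanned by Cof; iota : Phi >-> Omega
   is the subobject of Omega corresponding to Phi (the characteristic map of top),
   and cof : Omega -> Omega is the characteristic map of iota. *)
Definition C6 (Cof : MapClass) (Phi : Psh C) (top : Nat one Phi)
    (iota : Nat Phi Omega) (cof : Nat Omega Omega) : Prop :=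
  Cof one Phi top /\
  (forall A B (m : Nat A B), Cof A B m ->
     exists (a : Nat A one) (b : Nat B Phi),
       IsPullback A a m top b /\
       forall (a' : Nat A one) (b' : Nat B Phi),
         IsPullback A a' m top b' -> neq a' a /\ neq b' b) /\
  mono iota /\
  IsPullback one top (to_one one) iota trueO /\
  IsPullback Phi iota (to_one Phi) cof trueO.

End Basics.

(* Main.v *)
Require Import Defs.
From Stdlib Require Import FunctionalExtensionality PropExtensionality ProofIrrelevance ClassicalEpsilon.

Section Helpers.
Context {C : Cat}.

Lemma sig_eq_pi {A : Type} {P : A -> Prop} (x y : {a | P a}) :
  proj1_sig x = proj1_sig y -> x = y.
Proof. destruct x, y; simpl; intros ->; f_equal; apply proof_irrelevance. Qed.

Lemma sieve_full {c : Ob C} (S : sieve c) :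
  sv _ S c (idm c) -> forall d (f : Hom d c), sv _ S d f.
Proof. intros H d f. rewrite <- (comp_id_l _ _ _ f). now apply sv_closed. Qed.

Lemma sieve_max {c : Ob C} (S : sieve c) : sv _ S c (idm c) -> S = maxsieve c.
Proof. intros H. apply sieve_ext; intros d f; simpl; split; auto. intros _. now apply sieve_full. Qed.

Lemma pull_id {c : Ob C} (S : sieve c) : pull (idm c) S = S.
Proof. apply sieve_ext; intros d f; simpl. now rewrite comp_id_l. Qed.

Lemma pull_comp {a b d : Ob C} (f : Hom b a) (g : Hom d b) (S : sieve a) :
  pull g (pull f S) = pull (comp f g) S.
Proof. apply sieve_ext; intros e h; simpl. now rewrite comp_assoc. Qed.

Lemma pull_and {a b : Ob C} (f : Hom b a) (S T : sieve a) :
  pull f (andS S T) = andS (pull f S) (pull f T).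
Proof. apply sieve_ext; intros e h; simpl. tauto. Qed.

Program Definition hat {F : Psh C} {e : Ob C} (y : F e) : Nat (yon e) F :=
  MkNat (fun d f => act F f y) _.
Next Obligation. intros; simpl. apply act_comp. Qed.

Lemma mono_inj {F G : Psh C} (m : Nat F G) :
  mono m -> forall e x y, nt m e x = nt m e y -> x = y.
Proof.
  intros Hm e x y H.
  assert (Hn : neq (hat x) (hat y)).
  { apply Hm. intros d f. simpl. rewrite !nt_nat, H. reflexivity. }
  specialize (Hn e (idm e)). simpl in Hn. now rewrite !act_id in Hn.
Qed.

Lemma th_restr (th : Nat (@one C) Omega) (a b : Ob C) (f : Hom b a) :
  sv _ (nt th a tt) a (idm a) -> sv _ (nt th b tt) b (idm b).
Proof.
  intros H. pose proof (nt_nat _ _ th a b f tt) as E. simpl in E.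
  rewrite E. simpl. now apply sieve_full.
Qed.

Program Definition Pth (th : Nat (@one C) Omega) : Psh C :=
  MkPsh (fun a => (sv _ (nt th a tt) a (idm a) : Type)) (fun a b f H => th_restr th a b f H) _ _.
Next Obligation. intros; apply proof_irrelevance. Qed.
Next Obligation. intros; apply proof_irrelevance. Qed.

Lemma Pth_pb (th : Nat (@one C) Omega) : IsPullback (Pth th) (to_one _) (to_one _) th trueO.
Proof.
  split.
  - intros a x. simpl. now apply sieve_max.
  - intros X q1 q2 H.
    assert (Hp : forall a (x : X a), sv _ (nt th a tt) a (idm a)).
    { intros a x. specialize (H a x). simpl in H. destruct (q1 a x).
      rewrite H. simpl. exact I. }
    unshelve eexists (MkNat (F := X) (G := Pth th) (fun a x => Hp a x) _).
    + intros a b f x; apply (proof_irrelevance (sv _ (nt th b tt) b (idm b))).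
    + split; [|split].
      * intros a x; simpl. now destruct (q1 a x).
      * intros a x; simpl. now destruct (q2 a x).
      * intros u' _ _ a x. apply (proof_irrelevance (sv _ (nt th a tt) a (idm a))).
Qed.

Lemma forces_one (th : Nat (@one C) Omega) (c : Ob C) :
  forces c th (to_one (yon c)) <-> sv _ (nt th c tt) c (idm c).
Proof.
  split.
  - intros H. destruct (H _ _ _ (Pth_pb th)) as [h _].
    exact (nt h c (idm c)).
  - intros H S m t [Hc Hu].
    destruct (Hu (yon c) (to_one _) (to_one _)) as [u [Hu1 _]].
    + intros a f. simpl. apply sieve_max. now apply (th_restr th c a f).
    + exists u. exact Hu1.
Qed.

Lemma Eforces_forall (rho : Nat (prodP (@Omega C) Omega) Omega) :
  Eforces (forallO rho) <-> forall e (p : sieve e * sieve e), sv _ (nt rho e p) e (idm e).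
Proof.
  unfold Eforces. split.
  - intros H e p. specialize (H e). apply forces_one in H. simpl in H. exact (H e (idm e) p).
  - intros H c. apply forces_one. simpl. intros; apply H.
Qed.

Lemma chi_closed {A B : Psh C} (m : Nat A B) {e} (b : B e) :
  forall d d' (f : Hom d e) (g : Hom d' d),
    (exists a, nt m d a = act B f b) -> exists a, nt m d' a = act B (comp f g) b.
Proof.
  intros d d' f g [a Ha]. exists (act A g a). rewrite nt_nat, Ha. symmetry. apply act_comp.
Qed.

Definition chi {A B : Psh C} (m : Nat A B) {e} (b : B e) : sieve e :=
  @MkSieve C e (fun d f => exists a, nt m d a = act B f b) (chi_closed m b).

Lemma pull_chi {A B : Psh C} (m : Nat A B) {e d} (f : Hom d e) (b : B e) :
  pull f (chi m b) = chi m (act B f b).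
Proof. apply sieve_ext; intros d' g; simpl. now rewrite act_comp. Qed.

Program Definition Sub {e : Ob C} (S : sieve e) : Psh C :=
  MkPsh (fun d => {g : Hom d e | sv _ S d g})
        (fun a b f x => exist _ (comp (proj1_sig x) f) (sv_closed _ _ _ _ _ _ (proj2_sig x))) _ _.
Next Obligation. intros; apply sig_eq_pi; simpl. apply comp_id_r. Qed.
Next Obligation. intros; apply sig_eq_pi; simpl. apply comp_assoc. Qed.

Program Definition incl_y {e : Ob C} (S : sieve e) : Nat (Sub S) (yon e) :=
  MkNat (fun d x => proj1_sig x) _.

Program Definition incl {e : Ob C} (S T : sieve e) (H : forall d g, sv _ S d g -> sv _ T d g) :
  Nat (Sub S) (Sub T) := MkNat (fun d x => exist _ (proj1_sig x) (H _ _ (proj2_sig x))) _.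
Next Obligation. intros; apply sig_eq_pi; reflexivity. Qed.

End Helpers.

Section Main.
Context {C : Cat} (Cof : @MapClass C) (Phi : Psh C)
    (top : Nat one Phi) (iota : Nat Phi Omega) (cof : Nat (@Omega C) Omega).

Definition cofs {e : Ob C} (phi : sieve e) : Prop := sv _ (nt cof e phi) e (idm e).
Definition cofib {e : Ob C} (phi : sieve e) : Prop := exists x : Phi e, nt iota e x = phi.

Lemma cof_at {e d : Ob C} (phi : sieve e) (g : Hom d e) :
  sv _ (nt cof e phi) d g <-> cofs (pull g phi).
Proof.
  unfold cofs. pose proof (nt_nat _ _ cof e d g phi) as E. simpl in E. rewrite E. simpl.
  now rewrite comp_id_r.
Qed.

Lemma cofs_pull {e d : Ob C} (phi : sieve e) (g : Hom d e) : cofs phi -> cofs (pull g phi).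
Proof. intros H. apply (proj1 (cof_at phi g)). now apply sieve_full. Qed.

Definition P_ext : Prop :=
  forall e (phi psi : sieve e), cofs phi ->
    (forall d (g : Hom d e), sv _ phi d g -> cofs (pull g psi)) -> cofs (andS phi psi).

Lemma internal_iff :
  (forall e (p : sieve e * sieve e), sv _ (nt (theta_body cof) e p) e (idm e)) <-> P_ext.
Proof.
  split.
  - intros H e phi psi H1 H2. specialize (H e (phi, psi)); simpl in H.
    specialize (H e (idm e)). rewrite comp_id_l in H. specialize (H H1 e (idm e)).
    rewrite !comp_id_l in H. apply H. intros e2 g1 Hg. rewrite !comp_id_l in *.
    apply cof_at. now apply H2.
  - intros H e [phi psi]; simpl; intros e0 g H1 e1 g0 H2.
    rewrite !comp_id_l in *. apply (proj2 (cof_at _ _)). rewrite pull_and. apply H.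
    + apply (proj1 (cof_at _ _)). now apply sv_closed.
    + intros d l Hl. rewrite pull_comp. apply (proj1 (cof_at _ _)). apply H2. exact Hl.
Qed.

Hypothesis H6 : C6 Cof Phi top iota cof.

Lemma iota_inj : forall e x y, nt iota e x = nt iota e y -> x = y.
Proof. apply mono_inj. apply H6. Qed.

Lemma cofs_cofib {e : Ob C} (phi : sieve e) : cofs phi <-> cofib phi.
Proof.
  destruct H6 as [_ [_ [_ [_ [Hc Hu]]]]]. split.
  - intros H. destruct (Hu (yon e) (@hat C Omega e phi) (to_one _)) as [u [Hu1 _]].
    + intros d f. simpl. apply sieve_max. apply cof_at. rewrite pull_comp.
      now apply cofs_pull.
    + exists (nt u e (idm e)). pose proof (Hu1 e (idm e)) as E. simpl in E. rewrite E. apply pull_id.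
  - intros [x Hx]. unfold cofs. specialize (Hc e x). simpl in Hc.
    rewrite <- Hx, Hc. simpl. exact I.
Qed.

Lemma iota_top d : nt iota d (nt top d tt) = maxsieve d.
Proof. destruct H6 as [_ [_ [_ [[Hc _] _]]]]. exact (Hc d tt). Qed.

Lemma top_char d (y : Phi d) : sv _ (nt iota d y) d (idm d) -> y = nt top d tt.
Proof.
  intros H. destruct H6 as [_ [_ [_ [[_ Hu] _]]]].
  destruct (Hu (yon d) (hat y) (to_one _)) as [u [Hu2 _]].
  - intros a f. simpl. rewrite nt_nat. simpl. apply sieve_max.
    simpl. now apply sieve_full.
  - specialize (Hu2 d (idm d)). simpl in Hu2. rewrite act_id in Hu2.
    rewrite <- Hu2. now destruct (nt u d (idm d)).
Qed.

Lemma iota_sv {e d : Ob C} (y : Phi e) (f : Hom d e) :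
  sv _ (nt iota e y) d f <-> sv _ (nt iota d (act Phi f y)) d (idm d).
Proof.
  pose proof (nt_nat _ _ iota e d f y) as E. simpl in E. rewrite E. simpl.
  now rewrite comp_id_r.
Qed.

Lemma L_cof {A B : Psh C} (m : Nat A B) : Cof A B m -> forall e (b : B e), cofs (chi m b).
Proof.
  intros Hm e b. apply cofs_cofib.
  destruct H6 as [_ [H62 _]]. destruct (H62 A B m Hm) as [a0 [bh [[Hc Hu] _]]].
  exists (nt bh e b). apply sieve_ext; intros d f. rewrite iota_sv.
  rewrite <- nt_nat. simpl. split.
  - intros H. apply top_char in H.
    destruct (Hu (yon d) (to_one _) (hat (act B f b))) as [u [_ [Hu2 _]]].
    + intros a g. simpl. rewrite nt_nat, H, <- nt_nat. reflexivity.
    + exists (nt u d (idm d)). pose proof (Hu2 d (idm d)) as E. simpl in E. rewrite E. apply act_id.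
  - intros [a Ha]. rewrite <- Ha. specialize (Hc d a). simpl in Hc. rewrite <- Hc.
    destruct (nt a0 d a). rewrite iota_top. simpl. exact I.
Qed.

Hypothesis H4 : C4 Cof.

Lemma L_rev {A B : Psh C} (m : Nat A B) :
  (forall e x y, nt m e x = nt m e y -> x = y) ->
  (forall e (b : B e), cofs (chi m b)) -> Cof A B m.
Proof.
  intros Hinj Hc.
  assert (Hx : forall e (b : B e), {x : Phi e | nt iota e x = chi m b}).
  { intros. apply constructive_indefinite_description. apply cofs_cofib. apply Hc. }
  assert (Hnat : forall a b0 (f : Hom b0 a) (x : B a),
            proj1_sig (Hx b0 (act B f x)) = act Phi f (proj1_sig (Hx a x))).
  { intros. apply iota_inj. rewrite (proj2_sig (Hx _ _)), nt_nat. simpl.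
    destruct (Hx a x) as [x0 Hx0]. simpl. rewrite Hx0. symmetry. apply pull_chi. }
  set (bt := MkNat (F := B) (G := Phi) (fun e b => proj1_sig (Hx e b)) Hnat).
  destruct H6 as [Htop _].
  apply (H4 one Phi top B bt A (to_one A) m Htop).
  split.
  - intros a x. unfold bt; simpl. destruct (Hx a (nt m a x)) as [x0 Hx0]. simpl.
    apply iota_inj. rewrite iota_top, Hx0.
    apply sieve_ext; intros d f; simpl; split; auto; intros _.
    exists (act A f x). apply nt_nat.
  - intros X q1 q2 H.
    assert (Hy : forall a (x : X a), {y : A a | nt m a y = nt q2 a x}).
    { intros a x. apply constructive_indefinite_description.
      specialize (H a x). simpl in H. destruct (nt q1 a x).
      assert (E : chi m (nt q2 a x) = maxsieve a).
      { unfold bt in H; simpl in H. destruct (Hx a (nt q2 a x)) as [x0 Hx0]. simpl in H.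
        rewrite <- Hx0, <- H. apply iota_top. }
      assert (Hs : sv _ (chi m (nt q2 a x)) a (idm a)) by (rewrite E; exact I).
      destruct Hs as [y Hy]. exists y. rewrite Hy. apply act_id. }
    assert (Hnu : forall a b0 (f : Hom b0 a) (x : X a),
              proj1_sig (Hy b0 (act X f x)) = act A f (proj1_sig (Hy a x))).
    { intros. apply Hinj. rewrite (proj2_sig (Hy _ _)), !nt_nat, (proj2_sig (Hy _ _)).
      reflexivity. }
    exists (MkNat (F := X) (G := A) (fun a x => proj1_sig (Hy a x)) Hnu).
    split; [|split].
    + intros a x. simpl. now destruct (nt q1 a x).
    + intros a x. simpl. apply (proj2_sig (Hy a x)).
    + intros u' _ Hu' a x. simpl. apply Hinj. rewrite (proj2_sig (Hy a x)). apply Hu'.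
Qed.

End Main.

Theorem mainTheorem10 (C : Cat) (Cof : @MapClass C) (Phi : Psh C)
    (top : Nat one Phi) (iota : Nat Phi Omega) (cof : Nat Omega Omega) :
  C1 Cof -> C2 Cof -> C3 Cof -> C4 Cof -> C6 Cof Phi top iota cof ->
  (C5 Cof <-> Eforces (theta cof)).
Proof.
  intros H1 H2 H3 H4 H6.
  unfold theta. rewrite Eforces_forall, internal_iff. split.
  - intros H5 e phi psi Hphi Hpsi.
    assert (Hsub : forall d g, sv _ (andS phi psi) d g -> sv _ phi d g) by (intros d g [? ?]; auto).
    assert (Cm2 : Cof _ _ (incl_y phi)).
    { apply (L_rev Cof Phi top iota cof H6 H4).
      - intros a x y Hxy. now apply sig_eq_pi.
      - intros d b. assert (E : chi (incl_y phi) b = pull b phi).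
        { apply sieve_ext; intros d' f; simpl. split.
          - intros [[g Hg] Hg']. simpl in Hg'. now subst.
          - intros Hf. now exists (exist _ _ Hf). }
        rewrite E. now apply cofs_pull. }
    assert (Cm1 : Cof _ _ (incl _ _ Hsub)).
    { apply (L_rev Cof Phi top iota cof H6 H4).
      - intros a x y Hxy. apply sig_eq_pi. apply (f_equal (@proj1_sig _ _)) in Hxy. exact Hxy.
      - intros d [g Hg].
        match goal with |- context [chi ?mm ?bb] => assert (E : chi mm bb = pull g psi) end.
        { apply sieve_ext; intros d' f; simpl. split.
          - intros [[h [Hh1 Hh2]] Hh']. apply (f_equal (@proj1_sig _ _)) in Hh'. simpl in Hh'.
            now subst.
          - intros Hf. exists (exist _ (comp g f) (conj (sv_closed _ _ _ _ _ _ Hg) Hf)).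
            now apply sig_eq_pi. }
        rewrite E. now apply Hpsi. }
    pose proof (L_cof Cof Phi top iota cof H6 _ (H5 _ _ _ _ _ Cm1 Cm2) e (idm e)) as Hc.
    assert (E : chi (ncomp (incl_y phi) (incl _ _ Hsub)) (idm e) = andS phi psi).
    { apply sieve_ext; intros d f; simpl. rewrite comp_id_l. split.
      - intros [[g Hg] Hg']. simpl in Hg'. now subst.
      - intros Hf. exists (exist (fun g => sv _ (andS phi psi) d g) f Hf). reflexivity. }
    rewrite E in Hc. exact Hc.
  - intros HP A B D m n Hm Hn.
    pose proof (mono_inj m (H1 _ _ _ Hm)) as Im.
    pose proof (mono_inj n (H1 _ _ _ Hn)) as In.
    apply (L_rev Cof Phi top iota cof H6 H4).
    + intros e x y Hxy. apply Im, In. exact Hxy.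
    + intros e d.
      assert (E : andS (chi n d) (chi (ncomp n m) d) = chi (ncomp n m) d).
      { apply sieve_ext; intros d' f; simpl. split; [tauto|].
        intros [a Ha]. split; [now exists (nt m d' a)| now exists a]. }
      rewrite <- E. apply HP.
      * now apply (L_cof Cof Phi top iota cof H6).
      * intros d' g [b Hb]. rewrite pull_chi.
        assert (E2 : chi (ncomp n m) (act D g d) = chi m b).
        { apply sieve_ext; intros d'' f; simpl. rewrite <- Hb, <- nt_nat. split.
          - intros [a Ha]. exists a. now apply In.
          - intros [a Ha]. exists a. now rewrite Ha. }
        rewrite E2. now apply (L_cof Cof Phi top iota cof H6).
Qed.
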